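(* Every 5-basket is $(2P_3,C_4,C_6,C_7,T_0)$-free and contains an induced 3-pentagon. Moreover, every 5-basket is anticonnected and contains no simplicial and no universal vertices.
   Context: Graphs are finite, simple, nonnull. A graph is $(H_1,\dots,H_m)$-free if it has no induced subgraph isomorphic to any $H_i$. $P_k$, $C_k$ are the path and cycle on $k$ vertices; $2P_3$ is two disjoint copies of $P_3$. $T_0$ is the graph with vertices $p,q,u_0,u_1,u_2,u_3,w_1,w_2,w_3$ and edges $pq,pu_0,pu_2,pu_3,qu_1,qu_2,qu_3,u_0w_1,u_1w_1,u_2w_2,u_3w_3,w_1w_2,w_1w_3,w_2w_3$. The 3-pentagon is the graph on vertices $a,b_1,b_2,b_3,c_1,c_2,c_3$ where $a$ is adjacent to each $b_i$ and to no $c_i$, $\{b_1,b_2,b_3\}$ is stable, $\{c_1,c_2,c_3\}$ is a clique, and $b_ic_j$ is an edge iff $i=j$. A graph is anticonnected if its complement is connected. A vertex is simplicial if its neighbours form a (possibly empty) clique, universal if adjacent to all other vertices. For disjoint vertex sets $X,Y$, $X$ is complete (anticomplete) to $Y$ if every vertex of $X$ is adjacent (nonadjacent) to every vertex of $Y$. A 5-basket is a graph $Q$ whose vertex set partitions into $A,B_1,B_2,B_3,C_1,C_2,C_3,F$ where $A,B_i,C_i$ are nonempty cliques, $F$ is a possibly empty clique, $B_1,B_2,B_3$ are pairwise anticomplete, $C_1,C_2,C_3$ are pairwise complete; there is $i^*\in\{1,2,3\}$ such that $A$ is complete to $(B_1\cup B_2\cup B_3)\setminus B_{i^*}$ and $A$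 can be ordered $a_1,\dots,a_t$ with $N(a_t)\cap B_{i^*}\subseteq\cdots\subseteq N(a_1)\cap B_{i^*}=B_{i^*}$; $A$ is anticomplete to $C_1\cup C_2\cup C_3$; each $B_i$ is complete to $C_i$ and anticomplete to $C_j$ for $j\ne i$; and there is $j^*$ such that $F$ is complete to $V(Q)\setminus(B_{j^*}\cup C_{j^*}\cup F)$ and anticomplete to $B_{j^*}\cup C_{j^*}$. *)

(* Defs.v *)
From mathcomp Require Import all_boot.
Set Implicit Arguments. Unset Strict Implicit. Unset Printing Implicit Defensive.

Definition simple_graph (T : finType) (e : rel T) :=
  symmetric e /\ irreflexive e.

Definition has_induced (T U : finType) (e : rel T) (f : rel U) :=
  exists phi : U -> T, injective phi /\ forall x y, f x y = e (phi x) (phi y).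

Definition edge_rel (n : nat) (l : seq (nat * nat)) : rel 'I_n :=
  fun i j => ((nat_of_ord i, nat_of_ord j) \in l) || ((nat_of_ord j, nat_of_ord i) \in l).

Arguments edge_rel : clear implicits.

Definition cycle_rel (k : nat) : rel 'I_k :=
  fun i j => (nat_of_ord j == i.+1 %% k) || (nat_of_ord i == j.+1 %% k).

Arguments cycle_rel : clear implicits.

Definition twoP3 : rel 'I_6 := edge_rel 6 [:: (0,1); (1,2); (3,4); (4,5)].

(* T_0 : p=0, q=1, u0=2, u1=3, u2=4, u3=5, w1=6, w2=7, w3=8. *)
Definition T0 : rel 'I_9 := edge_rel 9
  [:: (0,1); (0,2); (0,4); (0,5); (1,3); (1,4); (1,5);
      (2,6); (3,6); (4,7); (5,8); (6,7); (6,8); (7,8)].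

(* 3-pentagon : a=0, b1=1, b2=2, b3=3, c1=4, c2=5, c3=6. *)
Definition pentagon3 : rel 'I_7 := edge_rel 7
  [:: (0,1); (0,2); (0,3); (4,5); (4,6); (5,6); (1,4); (2,5); (3,6)].

Section Basket.
Variables (T : finType) (e : rel T).

Definition nbhd (v : T) : {set T} := [set u | e v u].

Definition is_clique (X : {set T}) :=
  forall x y, x \in X -> y \in X -> x != y -> e x y.
Definition is_stable (X : {set T}) :=
  forall x y, x \in X -> y \in X -> ~~ e x y.
Definition complete (X Y : {set T}) :=
  forall x y, x \in X -> y \in Y -> e x y.
Definition anticomplete (X Y : {set T}) :=
  forall x y, x \in X -> y \in Y -> ~~ e x y.

Definition anticonnected :=
  forall x y, connect (fun u v => (u != v) && ~~ e u v) x y.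

Definition simplicial (v : T) := is_clique (nbhd v).
Definition universal (v : T) := forall u, u != v -> e v u.

Definition partitions (parts : seq {set T}) :=
  forall v, count (fun S : {set T} => v \in S) parts = 1.

Definition five_basket :=
  exists (A : {set T}) (B C : 'I_3 -> {set T}) (F : {set T}),
    partitions [:: A; B ord0; B (inord 1); B (inord 2);
                   C ord0; C (inord 1); C (inord 2); F] /\
    (A != set0 /\ is_clique A) /\
    (forall i, B i != set0 /\ is_clique (B i)) /\
    (forall i, C i != set0 /\ is_clique (C i)) /\
    is_clique F /\
    (forall i j, i != j -> anticomplete (B i) (B j)) /\
    (forall i j, i != j -> complete (C i) (C j)) /\
    (exists istar : 'I_3,
       (forall i, i != istar -> complete A (B i)) /\
       exists s : seq T,
         [/\ uniq s, (forall x, (x \in s) = (x \in A)),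
             pairwise (fun a b => nbhd b :&: B istar \subset nbhd a :&: B istar) s &
             (if s is a1 :: _ then nbhd a1 :&: B istar = B istar else False)]) /\
    (forall i, anticomplete A (C i)) /\
    (forall i, complete (B i) (C i)) /\
    (forall i j, i != j -> anticomplete (B i) (C j)) /\
    (exists jstar : 'I_3,
       complete F (~: (B jstar :|: C jstar :|: F)) /\
       anticomplete F (B jstar :|: C jstar)).
End Basket.

(* Main.v *)
Require Import Defs.
From mathcomp Require Import all_boot.
Definition tab (ist js p q : nat) : bool :=
 if p == q then true else
 let a := minn p q in let b := maxn p q in
 if a == 0 then (if b <= 3 then true else if b <= 6 then false else true)
 else if a <= 3 then (if b <= 3 then false else if b <= 6 then (b - 4 == a - 1) else (a - 1 != js))
 else if a <= 6 then (if b <= 6 then true else (a - 4 != js))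
 else true.
Definition exempt (ist p q : nat) := ((p == 0) && (q == ist.+1)) || ((q == 0) && (p == ist.+1)).
Definition okpair ist js (hn : nat -> nat -> bool) i j p q := (i == j) || exempt ist p q || (hn i j == tab ist js p q).
Definition ok ist js hn (l : seq nat) := all (fun i => all (fun j => okpair ist js hn i j (nth 0 l i) (nth 0 l j)) (iota 0 (size l))) (iota 0 (size l)).
Definition ok2 (ist : nat) (hn : nat -> nat -> bool) (l : seq nat) := all (fun i => all (fun j => all (fun i' => all (fun j' =>
  ~~ [&& nth 0 l i == 0, nth 0 l i' == 0, nth 0 l j == ist.+1, nth 0 l j' == ist.+1, hn i j, hn i' j', ~~ hn i j' & ~~ hn i' j])
  (iota 0 (size l))) (iota 0 (size l))) (iota 0 (size l))) (iota 0 (size l)).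
Definition ext ist js hn (ls : seq (seq nat)) := flatten [seq [seq rcons x c | c <- iota 0 8 & ok ist js hn (rcons x c)] | x <- ls].
Definition search ist js hn k := filter (ok2 ist hn) (iter k (ext ist js hn) [:: [::]]).
Definition erel (l : seq (nat*nat)) i j := ((i,j) \in l) || ((j,i) \in l).
Definition crel k (i j : nat) := (j == i.+1 %% k) || (i == j.+1 %% k).
Definition allc k hn := all (fun ist => all (fun js => search ist js hn k == [::]) (iota 0 3)) (iota 0 3).

Lemma nth_mapL (L : nat -> nat) m i : i < m -> nth 0 (map L (iota 0 m)) i = L i.
Proof. by move=> him; rewrite (nth_map 0) ?size_iota // nth_iota. Qed.

Lemma search_sound ist js hn k (L : nat -> nat) :
 (forall i, i < k -> L i < 8) ->
 (forall i j, i < k -> j < k -> okpair ist js hn i j (L i) (L j)) ->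
 (forall i j i' j', i<k -> j<k -> i'<k -> j'<k ->
   ~~ [&& L i == 0, L i' == 0, L j == ist.+1, L j' == ist.+1, hn i j, hn i' j', ~~ hn i j' & ~~ hn i' j]) ->
 search ist js hn k = [::] -> False.
Proof.
move=> HL Hp H2 Hs.
have okm m : m <= k -> ok ist js hn (map L (iota 0 m)).
  move=> mk; apply/allP => i; rewrite size_map size_iota mem_iota add0n => /andP[_ im].
  apply/allP => j; rewrite mem_iota add0n => /andP[_ jm].
  rewrite !nth_mapL //; apply: Hp; exact: leq_trans mk.
have inm m : m <= k -> map L (iota 0 m) \in iter m (ext ist js hn) [:: [::]].
  elim: m => [|m IH] mk; first by rewrite inE.
  have Em : map L (iota 0 m.+1) = rcons (map L (iota 0 m)) (L m).
    by rewrite -addn1 iotaD map_cat cats1.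
  rewrite iterS /ext; apply/flatten_mapP; exists (map L (iota 0 m)).
    by apply: IH; apply: ltnW.
  rewrite Em mem_map; last by move=> x y /rcons_inj [].
  by rewrite mem_filter mem_iota /= HL // andbT -Em okm.
have : map L (iota 0 k) \in search ist js hn k.
  rewrite mem_filter inm // andbT.
  apply/allP => i; rewrite size_map size_iota mem_iota add0n => /andP[_ ik].
  apply/allP => j; rewrite mem_iota add0n => /andP[_ jk].
  apply/allP => i'; rewrite mem_iota add0n => /andP[_ i'k].
  apply/allP => j'; rewrite mem_iota add0n => /andP[_ j'k].
  by rewrite !nth_mapL //; apply: H2.
by rewrite Hs.
Qed.
From mathcomp Require Import zify.
Inductive lbl := LA | LB of 'I_3 | LC of 'I_3 | LF.
Definition code x := match x with LA => 0 | LB i => i.+1 | LC i => i + 4 | LF => 7 end.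
Definition tabL (js : 'I_3) x y := match x, y with
 | LA, LC _ | LC _, LA => false
 | LB i, LB j => i == j
 | LB i, LC j | LC j, LB i => i == j
 | LB i, LF | LF, LB i | LC i, LF | LF, LC i => i != js
 | _, _ => true end.
Definition exemptL (ist : 'I_3) x y := match x,y with LA, LB i | LB i, LA => i == ist | _,_ => false end.

Lemma tab_code (ist : nat) (js : 'I_3) x y : tab ist js (code x) (code y) = tabL js x y.
Proof.
case: js => js Hjs.
case: x => [|[i Hi]|[i Hi]|]; case: y => [|[j Hj]|[j Hj]|]; rewrite /tab /tabL /= ?eqE /=;
 move: Hjs; try move: Hi; try move: Hj;
 do ?[case: i => [|[|[|i]]] //]; do ?[case: j => [|[|[|j]]] //]; case: js => [|[|[|js]]] //.
Qed.

Lemma exempt_code (ist : 'I_3) x y : exempt ist (code x) (code y) = exemptL ist x y.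
Proof.
case: ist => ist Hist.
case: x => [|[i Hi]|[i Hi]|]; case: y => [|[j Hj]|[j Hj]|]; rewrite /exempt /exemptL /= ?eqE /=;
 move: Hist; try move: Hi; try move: Hj;
 do ?[case: i => [|[|[|i]]] //]; do ?[case: j => [|[|[|j]]] //]; case: ist => [|[|[|ist]]] //.
Qed.

Lemma code0 x : code x = 0 -> x = LA.
Proof. case: x => //= i E; lia. Qed.

Lemma codeB (ist : 'I_3) x : code x = ist.+1 -> x = LB ist.
Proof.
case: x => [|[i Hi]|[i Hi]|] /=; case: ist => ist Hist /= E; try lia.
by congr LB; apply: val_inj => /=; lia.
Qed.

Lemma no_ind (T : finType) (e : rel T) (lab : T -> lbl) (ist js : 'I_3) k (f : rel 'I_k.+1) (hn : nat -> nat -> bool) :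
 (forall x y : 'I_k.+1, f x y = hn x y) ->
 search ist js hn k.+1 = [::] ->
 (forall u v, u != v -> ~~ exemptL ist (lab u) (lab v) -> e u v = tabL js (lab u) (lab v)) ->
 (forall a a' b b', lab a = LA -> lab a' = LA -> lab b = LB ist -> lab b' = LB ist ->
     e a b -> e a' b' -> e a b' || e a' b) ->
 ~ has_induced e f.
Proof.
move=> Hf Hs Hadj Hch [phi [phiI Hphi]].
pose L i := code (lab (phi (inord i))).
have Hh i j : i < k.+1 -> j < k.+1 -> hn i j = e (phi (inord i)) (phi (inord j)).
  by move=> ik jk; rewrite -Hphi Hf !inordK.
apply: (@search_sound ist js hn k.+1 L _ _ _ Hs).
- move=> i _; rewrite /L; case: (lab _) => //= [[j Hj]|[j Hj]] /=; lia.
- move=> i j ik jk; rewrite /okpair; case: eqVneq => //= ij.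
  rewrite /L exempt_code tab_code; case E: exemptL => //=.
  rewrite Hh // Hadj ?E //.
  apply: contra_neq ij => /phiI /(congr1 val); rewrite /= !inordK //.
- move=> i j i' j' ik jk i'k j'k; apply/negP.
  case: (L i =P 0) => //= a; case: (L i' =P 0) => //= a'.
  case: (L j =P ist.+1) => //= b; case: (L j' =P ist.+1) => //= b'.
  rewrite !Hh //.
  case h1: (e _ _) => //=; case h2: (e _ _) => //=.
  have := Hch _ _ _ _ (code0 _ a) (code0 _ a') (codeB _ _ b) (codeB _ _ b') h1 h2.
  by case: (e _ _); case: (e _ _).
Qed.

Lemma count1_nth (X : Type) (a : pred X) (s : seq X) x0 p q :
  count a s = 1 -> p < size s -> q < size s -> a (nth x0 s p) -> a (nth x0 s q) -> p = q.
Proof.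
have pos r t : r < size t -> a (nth x0 t r) -> 0 < count a t.
  by move=> rt ar; rewrite -has_count; apply/(has_nthP x0); exists r.
elim: s p q => // y s IH [|p] [|q] //= Hc Hp Hq ha hb.
- have := pos _ _ Hq hb; move: Hc; rewrite ha /=; lia.
- have := pos _ _ Hp ha; move: Hc; rewrite hb /=; lia.
- congr S; apply: IH => //; have := pos _ _ Hp ha; move: Hc; case: (a y) => /=; lia.
Qed.

Lemma LBne (i j : 'I_3) : i != j -> LB i <> LB j.
Proof. by move=> ij [E]; rewrite E eqxx in ij. Qed.
Lemma LCne (i j : 'I_3) : i != j -> LC i <> LC j.
Proof. by move=> ij [E]; rewrite E eqxx in ij. Qed.
Lemma o01 : (ord0 : 'I_3) != inord 1. Proof. by rewrite -val_eqE /= inordK. Qed.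
Lemma o02 : (ord0 : 'I_3) != inord 2. Proof. by rewrite -val_eqE /= inordK. Qed.
Lemma o12 : (inord 1 : 'I_3) != inord 2. Proof. by rewrite -val_eqE /= !inordK. Qed.
Lemma o10 : (inord 1 : 'I_3) != ord0. Proof. by rewrite eq_sym o01. Qed.
Lemma o20 : (inord 2 : 'I_3) != ord0. Proof. by rewrite eq_sym o02. Qed.
Lemma o21 : (inord 2 : 'I_3) != inord 1. Proof. by rewrite eq_sym o12. Qed.
Lemma pent_irr x : pentagon3 x x = false.
Proof. by case: x => [[|[|[|[|[|[|[|x]]]]]]] Hx]. Qed.

Lemma pairwise_in {X : eqType} {r : X -> X -> bool} {s : seq X} {x y} :
  pairwise r s -> x \in s -> y \in s -> x = y \/ r x y \/ r y x.
Proof.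
elim: s => // z s IH; rewrite pairwise_cons => /andP[/allP Hz Hs].
rewrite !inE => /orP[/eqP->|xs] /orP[/eqP->|ys]; first by left.
- by right; left; apply: Hz.
- by right; right; apply: Hz.
- exact: IH.
Qed.

Lemma allc_ok k hn : allc k hn -> forall ist js : 'I_3, search ist js hn k = [::].
Proof.
move=> /allP H ist js; have := H ist; rewrite mem_iota ltn_ord => /(_ isT) /allP /(_ js).
by rewrite mem_iota ltn_ord => /(_ isT) /eqP.
Qed.

Theorem proposition5p2 (T : finType) (e : rel T) :
  simple_graph e -> five_basket e ->
  (~ has_induced e twoP3 /\
   ~ has_induced e (cycle_rel 4) /\
   ~ has_induced e (cycle_rel 6) /\
   ~ has_induced e (cycle_rel 7) /\
   ~ has_induced e T0) /\
  has_induced e pentagon3 /\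
  anticonnected e /\
  (forall v, ~ simplicial e v) /\
  (forall v, ~ universal e v).
Proof.
move=> [esym eirr] [A [B [C [F [Hpart [[A0 cA] [HB [HC [cF [BB [CC [[ist [AB [s [us ms pw s1]]]] [AC [BC [BCn [jst [Fc Fa]]]]]]]]]]]]]]]]].
pose PL x := match x with LA => A | LB i => B i | LC i => C i | LF => F end.
have ord3 (i : 'I_3) : i = ord0 \/ i = inord 1 \/ i = inord 2.
  case: i => [[|[|[|i]]] Hi] //; [left|right;left|right;right]; by apply: val_inj; rewrite /= ?inordK.
have codeI x y : code x = code y -> x = y.
  case: x => [|[i Hi]|[i Hi]|]; case: y => [|[j Hj]|[j Hj]|] //= E; try lia.
  1,2: have ij : i = j by lia.
  1,2: by subst j; rewrite (bool_irrelevance Hi Hj).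
have code8 x : code x < 8 by case: x => [|[i Hi]|[i Hi]|] /=; lia.
have PLn x : PL x = nth set0 [:: A; B ord0; B (inord 1); B (inord 2); C ord0;
     C (inord 1); C (inord 2); F] (code x).
  case: x => [|i|i|] //=; case: (ord3 i) => [->|[->|->]]; by rewrite /= ?inordK.
have disj v x y : v \in PL x -> v \in PL y -> x = y.
  rewrite !PLn => hx hy; apply: codeI; exact: (@count1_nth _ _ _ set0 _ _ (Hpart v) (code8 x) (code8 y) hx hy).
pose lab v := if v \in A then LA else if v \in B ord0 then LB ord0
  else if v \in B (inord 1) then LB (inord 1) else if v \in B (inord 2) then LB (inord 2)
  else if v \in C ord0 then LC ord0 else if v \in C (inord 1) then LC (inord 1)
  else if v \in C (inord 2) then LC (inord 2) else LF.
have labP v : v \in PL (lab v).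
  rewrite /lab; case: ifP => [//|h1]; case: ifP => [//|h2]; case: ifP => [//|h3];
  case: ifP => [//|h4]; case: ifP => [//|h5]; case: ifP => [//|h6]; case: ifP => [//|h7].
  move: (Hpart v); rewrite /partitions /= h1 h2 h3 h4 h5 h6 h7.
  by case: (v \in F).
have neqPL u v x y : u \in PL x -> v \in PL y -> x <> y -> u != v.
  by move=> hu hv nxy; apply/eqP => E; apply: nxy; apply: disj hu _; rewrite E.
have inFc u x : u \in PL x -> x <> LB jst -> x <> LC jst -> x <> LF ->
    u \in ~: (B jst :|: C jst :|: F).
  move=> hu n1 n2 n3; rewrite in_setC !in_setU; apply/negP => /orP[/orP[h|h]|h].
  - by apply: n1; exact: (disj u x (LB jst) hu h).
  - by apply: n2; exact: (disj u x (LC jst) hu h).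
  - by apply: n3; exact: (disj u x LF hu h).
have adj u v x y : u \in PL x -> v \in PL y -> u != v -> ~~ exemptL ist x y ->
    e u v = tabL jst x y.
  move=> hu hv uv; case: x hu => [|i|i|] /= hu; case: y hv => [|j|j|] /= hv /= nex.
  - exact: cA.
  - exact: (AB j).
  - exact/negbTE/(AC j).
  - by rewrite esym; apply: Fc hv _; apply: (inFc u LA hu).
  - by rewrite esym; apply: (AB i).
  - case: eqVneq => [E|ne]; first by subst; apply: (HB j).2.
    exact/negbTE/(BB i j ne).
  - case: eqVneq => [E|ne]; first by subst; exact: (BC _ _ _ hu hv).
    exact/negbTE/(BCn i j ne).
  - case: eqVneq => [E|ne] /=.
      by subst; rewrite esym; apply/negbTE; apply: Fa hv _; rewrite in_setU hu.
    rewrite esym; apply: Fc hv _; apply: (inFc u (LB i) hu) => // [[E]].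
    by rewrite E eqxx in ne.
  - by rewrite esym; apply/negbTE/(AC i).
  - case: eqVneq => [E|ne]; first by subst; rewrite esym; exact: (BC _ _ _ hv hu).
    by rewrite esym; apply/negbTE/(BCn j i ne).
  - case: (eqVneq i j) => [E|ne]; first by subst; apply: (HC j).2.
    exact: (CC i j ne).
  - case: eqVneq => [E|ne] /=.
      by subst; rewrite esym; apply/negbTE; apply: Fa hv _; rewrite in_setU hu orbT.
    rewrite esym; apply: Fc hv _; apply: (inFc u (LC i) hu) => // [[E]].
    by rewrite E eqxx in ne.
  - by apply: Fc hu _; apply: (inFc v LA hv).
  - case: eqVneq => [E|ne] /=.
      by subst; apply/negbTE; apply: Fa hu _; rewrite in_setU hv.
    apply: Fc hu _; apply: (inFc v (LB j) hv) => // [[E]].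
    by rewrite E eqxx in ne.
  - case: eqVneq => [E|ne] /=.
      by subst; apply/negbTE; apply: Fa hu _; rewrite in_setU hv orbT.
    apply: Fc hu _; apply: (inFc v (LC j) hv) => // [[E]].
    by rewrite E eqxx in ne.
  - exact: cF.
have oth i : exists j : 'I_3, j != i.
  case: (ord3 i) => [->|[->|->]]; [exists (inord 1) | exists ord0 | exists ord0];
  by rewrite ?o01 ?o02 // eq_sym ?o01 ?o02.
case Es: s s1 => [//|a1 s'] s1.
have a1A : a1 \in A by rewrite -ms Es inE eqxx.
have a1B v : v \in B ist -> e a1 v.
  by rewrite -{1}s1 !inE => /andP[].
have chain a a' b b' : a \in A -> a' \in A -> b \in B ist -> b' \in B ist ->
    e a b -> e a' b' -> e a b' || e a' b.
  move=> ha ha' hb hb' h1 h2; rewrite -!ms in ha ha'.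
  case: (pairwise_in pw ha ha') => [E|[H|H]].
  - by subst; rewrite h2.
  - have : b' \in nbhd e a' :&: B ist by rewrite !inE h2 hb'.
    by move/(subsetP H); rewrite !inE => /andP[->].
  - have : b \in nbhd e a :&: B ist by rewrite !inE h1 hb.
    by move/(subsetP H); rewrite !inE => /andP[->]; rewrite orbT.
have adjA u v x y : u \in PL x -> v \in PL y -> u != v -> (x = LA -> u = a1) ->
    (y = LA -> v = a1) -> e u v = tabL jst x y.
  move=> hu hv uv h1 h2; case E: (exemptL ist x y); last by apply: adj => //; rewrite E.
  move: E hu hv h1 h2; case: x => [|i|i|]; case: y => [|j|j|] //= /eqP -> hu hv h1 h2.
  - by rewrite h1 // a1B.
  - by rewrite h2 // esym a1B.
pose b i := odflt a1 [pick x in B i].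
have bP i : b i \in B i.
  rewrite /b; case: pickP => [x hx //|H].
  by have /set0Pn [x hx] := (HB i).1; rewrite H in hx.
pose c i := odflt a1 [pick x in C i].
have cP i : c i \in C i.
  rewrite /c; case: pickP => [x hx //|H].
  by have /set0Pn [x hx] := (HC i).1; rewrite H in hx.
have noind k (f : rel 'I_k.+1) (hn : nat -> nat -> bool) : (forall x y : 'I_k.+1, f x y = hn x y) ->
    allc k.+1 hn -> ~ has_induced e f.
  move=> Hf Hc; apply: (no_ind T e lab ist jst k f hn Hf (allc_ok k.+1 hn Hc ist jst)).
  - by move=> u v uv nex; apply: adj => //; apply: labP.
  - move=> a a' b0 b0' la la' lb lb'; apply: chain.
    + by have := labP a; rewrite la.
    + by have := labP a'; rewrite la'.
    + by have := labP b0; rewrite lb.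
    + by have := labP b0'; rewrite lb'.
split.
  split; first by apply: (noind 5 twoP3 (erel [:: (0,1); (1,2); (3,4); (4,5)])) ; [by [] | by vm_compute].
  split; first by apply: (noind 3 (cycle_rel 4) (crel 4)) ; [by [] | by vm_compute].
  split; first by apply: (noind 5 (cycle_rel 6) (crel 6)) ; [by [] | by vm_compute].
  split; first by apply: (noind 6 (cycle_rel 7) (crel 7)) ; [by [] | by vm_compute].
  apply: (noind 8 T0 (erel [:: (0,1); (0,2); (0,4); (0,5); (1,3); (1,4); (1,5);
      (2,6); (3,6); (4,7); (5,8); (6,7); (6,8); (7,8)])) ; [by [] | by vm_compute].
have BBr i j u v : u \in B i -> v \in B j -> i != j -> e u v = false.
  move=> hu hv ij; rewrite (adj u v (LB i) (LB j)) //= ?(negbTE ij) //.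
  exact: (neqPL u v (LB i) (LB j) hu hv (LBne i j ij)).
split.
  pose lx (x : 'I_7) := nth LA [:: LA; LB ord0; LB (inord 1); LB (inord 2);
                                   LC ord0; LC (inord 1); LC (inord 2)] x.
  pose phi (x : 'I_7) := nth a1 [:: a1; b ord0; b (inord 1); b (inord 2);
                                   c ord0; c (inord 1); c (inord 2)] x.
  have phiP x : phi x \in PL (lx x).
    case: x => [[|[|[|[|[|[|[|x]]]]]]] Hx] //=; by rewrite ?bP ?cP.
  have codelx x : code (lx x) = x.
    case: x => [[|[|[|[|[|[|[|x]]]]]]] Hx] //=; by rewrite ?inordK.
  have phiI : injective phi.
    move=> x y E; apply: val_inj; rewrite /= -codelx -(codelx y); congr code.
    by apply: (disj (phi x)); [exact: phiP | rewrite E; exact: phiP].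
  have phiA x : lx x = LA -> phi x = a1.
    move=> /(congr1 code); rewrite codelx /= => x0.
    by rewrite /phi; case: x x0 => [[|x] Hx] //= _.
  have pent x y : x != y -> pentagon3 x y = tabL jst (lx x) (lx y).
    rewrite -val_eqE.
    case: x => [[|[|[|[|[|[|[|x]]]]]]] Hx] //=; case: y => [[|[|[|[|[|[|[|y]]]]]]] Hy] //= _;
    by rewrite ?eqxx ?(negbTE o01) ?(negbTE o02) ?(negbTE o12) ?(negbTE o10) ?(negbTE o20) ?(negbTE o21).
  exists phi; split => // x y.
  case: (eqVneq x y) => [<-|ne]; first by rewrite pent_irr eirr.
  have pxy : phi x != phi y by apply: contra_neq ne; exact: phiI.
  by rewrite pent // (adjA (phi x) (phi y) (lx x) (lx y) (phiP x) (phiP y) pxy (phiA x) (phiA y)).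
split.
  have rsym : connect_sym (fun u v => (u != v) && ~~ e u v).
    by apply: sym_connect_sym => u v; rewrite eq_sym esym.
  have nadj u v X Y : u \in PL X -> v \in PL Y -> X <> Y -> ~~ exemptL ist X Y ->
      tabL jst X Y = false -> connect (fun u v => (u != v) && ~~ e u v) u v.
    move=> hu hv XY nex tf; apply: connect1.
    by rewrite (neqPL u v X Y hu hv XY) (adj u v X Y hu hv (neqPL u v X Y hu hv XY) nex) tf.
  have hubB i v : v \in B i -> connect (fun u v => (u != v) && ~~ e u v) v (b ord0).
    case: (eqVneq i ord0) => [->|ne] hv.
    - apply: connect_trans (nadj v (b (inord 1)) (LB ord0) (LB (inord 1)) hv (bP _) (LBne _ _ o01) isT _)
        (nadj _ _ (LB (inord 1)) (LB ord0) (bP _) (bP _) (LBne _ _ o10) isT _).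
      + by rewrite /= (negbTE o01).
      + by rewrite /= (negbTE o10).
    - exact: (nadj v (b ord0) (LB i) (LB ord0) hv (bP _) (LBne _ _ ne) isT (negbTE ne)).
  have hubC i v : v \in C i -> connect (fun u v => (u != v) && ~~ e u v) v (b ord0).
    move=> hv; have [j ji] := oth i.
    apply: connect_trans (nadj v (b j) (LC i) (LB j) hv (bP j) _ isT _) (hubB j _ (bP j)) => //.
    by rewrite /= (negbTE ji).
  have hub v : connect (fun u v => (u != v) && ~~ e u v) v (b ord0).
    case: (lab v) (labP v) => [|i|i|] /= hv.
    - exact: connect_trans (nadj v (c ord0) LA (LC ord0) hv (cP _) _ isT erefl) (hubC _ _ (cP ord0)).
    - exact: hubB hv.
    - exact: hubC hv.
    - apply: connect_trans (nadj v (b jst) LF (LB jst) hv (bP _) _ isT _) (hubB _ _ (bP _)) => //.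
      by rewrite /= eqxx.
  by move=> x y; apply: connect_trans (hub x) _; rewrite rsym.
split.
  move=> v Hs.
  have nb u w : u \in nbhd e v -> w \in nbhd e v -> u != w -> e u w = false -> False.
    by move=> hu hw uw euw; move: (Hs u w hu hw uw); rewrite euw.
  case: (lab v) (labP v) => [|i|i|] /= hv.
  - have [p [q [pq pi qi]]] : exists p q : 'I_3, [/\ p != q, p != ist & q != ist].
      case: (ord3 ist) => [->|[->|->]].
      + by exists (inord 1), (inord 2); rewrite o12 o10 o20.
      + by exists ord0, (inord 2); rewrite o02 o01 o21.
      + by exists ord0, (inord 1); rewrite o01 o02 o12.
    apply: (nb (b p) (b q)).
    + by rewrite inE (adj v (b p) LA (LB p) hv (bP p) (neqPL _ _ LA (LB p) hv (bP p) (fun E => ltac:(discriminate))) pi).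
    + by rewrite inE (adj v (b q) LA (LB q) hv (bP q) (neqPL _ _ LA (LB q) hv (bP q) (fun E => ltac:(discriminate))) qi).
    + exact: (neqPL _ _ (LB p) (LB q) (bP p) (bP q) (LBne _ _ pq)).
    + exact: BBr (bP p) (bP q) pq.
  - apply: (nb a1 (c i)).
    + by rewrite inE (adjA v a1 (LB i) LA hv a1A (neqPL v a1 (LB i) LA hv a1A (fun E => ltac:(discriminate)))).
    + by rewrite inE (adj v (c i) (LB i) (LC i) hv (cP i) (neqPL _ _ (LB i) (LC i) hv (cP i) (fun E => ltac:(discriminate))) isT) /= eqxx.
    + exact: (neqPL _ _ LA (LC i) a1A (cP i) (fun E => ltac:(discriminate))).
    + exact: (adj a1 (c i) LA (LC i) a1A (cP i) (neqPL _ _ LA (LC i) a1A (cP i) (fun E => ltac:(discriminate))) isT).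
  - have [j ji] := oth i.
    have ij : i != j by rewrite eq_sym.
    apply: (nb (b i) (c j)).
    + by rewrite inE (adj v (b i) (LC i) (LB i) hv (bP i) (neqPL _ _ (LC i) (LB i) hv (bP i) (fun E => ltac:(discriminate))) isT) /= eqxx.
    + by rewrite inE (adj v (c j) (LC i) (LC j) hv (cP j) (neqPL _ _ (LC i) (LC j) hv (cP j) (LCne _ _ ij)) isT).
    + exact: (neqPL _ _ (LB i) (LC j) (bP i) (cP j) (fun E => ltac:(discriminate))).
    + by rewrite (adj (b i) (c j) (LB i) (LC j) (bP i) (cP j) (neqPL _ _ (LB i) (LC j) (bP i) (cP j) (fun E => ltac:(discriminate))) isT) /= (negbTE ij).
  - have [j jj] := oth jst.
    apply: (nb a1 (c j)).
    + by rewrite inE (adjA v a1 LF LA hv a1A (neqPL v a1 LF LA hv a1A (fun E => ltac:(discriminate)))).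
    + by rewrite inE (adj v (c j) LF (LC j) hv (cP j) (neqPL _ _ LF (LC j) hv (cP j) (fun E => ltac:(discriminate))) isT) /= jj.
    + exact: (neqPL _ _ LA (LC j) a1A (cP j) (fun E => ltac:(discriminate))).
    + exact: (adj a1 (c j) LA (LC j) a1A (cP j) (neqPL _ _ LA (LC j) a1A (cP j) (fun E => ltac:(discriminate))) isT).
move=> v Hu.
have nu u X Y : v \in PL X -> u \in PL Y -> X <> Y -> ~~ exemptL ist X Y ->
    tabL jst X Y = false -> False.
  move=> hv hu XY nex tf.
  have vu := neqPL v u X Y hv hu XY.
  have uv : u != v by rewrite eq_sym.
  by move: (Hu u uv); rewrite (adj v u X Y hv hu vu nex) tf.
case: (lab v) (labP v) => [|i|i|] /= hv.
- exact: (nu (c ord0) LA (LC ord0) hv (cP _) (fun E => ltac:(discriminate)) isT erefl).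
- have [j ji] := oth i.
  have ij : i != j by rewrite eq_sym.
  by apply: (nu (b j) (LB i) (LB j) hv (bP j) (LBne _ _ ij) isT); rewrite /= (negbTE ij).
- have [j ji] := oth i.
  by apply: (nu (b j) (LC i) (LB j) hv (bP j) (fun E => ltac:(discriminate)) isT); rewrite /= (negbTE ji).
- by apply: (nu (b jst) LF (LB jst) hv (bP jst) (fun E => ltac:(discriminate)) isT); rewrite /= eqxx.
Qed.
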